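(* Let $X_\lambda$ be a cellular multipointed $d$-space and $\gamma$ an execution path of $X_\lambda$. Then the globular naturalization $\mathrm{natgl}(\gamma)$ of $\gamma$ is a regular path.
   Context: $\mathcal{M}(\ell,\ell')$ denotes the set of non-decreasing surjective continuous maps $[0,\ell]\to[0,\ell']$. Moore composition $*$ concatenates paths $[0,\ell_1]\to U$ and $[0,\ell_2]\to U$ into a path $[0,\ell_1+\ell_2]\to U$; normalized composition of $\gamma_1,\gamma_2:[0,1]\to U$ is $\gamma_1*_N\gamma_2(t)=\gamma_1(2t)$ for $t\le1/2$, $\gamma_2(2t-1)$ for $t\ge1/2$. A multipointed $d$-space is $(|X|,X^0,\mathbb{P}^{\mathrm{top}}X)$: a space, a set of states $X^0\subset|X|$, a set of continuous maps $[0,1]\to|X|$ (execution paths) with endpoints in $X^0$, closed under precomposition by $\mathcal{M}(1,1)$ and normalized composition; maps preserve states and execution paths. For a space $Z$, $\mathrm{Glob}^{\mathrm{top}}(Z)$ is the multipointed $d$-space whose underlying space is the quotient of $\{0,1\}\sqcup Z\times[0,1]$ identifying $(z,0)$ with $0$ and $(z,1)$ with $1$ for all $z$, whose states are $\{0,1\}$, and whose execution paths are $\delta_z\phi$ with $z\in Z$, $\phi\in\mathcal{M}(1,1)$, $\delta_z(t)=(z,t)$. $\mathbf{D}^n$ is the closed $n$-disk, $\mathbf{S}^{n-1}$ its boundary sphere ($\mathbf{D}^0$ a point, $\mathbf{S}^{-1}=\varnothing$). A cellular multipointed $d$-space is the colimit $X_\lambda=\varinjlim_{\nu<\lambda}X_\nu$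 of a colimit-preserving functor $\nu\mapsto X_\nu$ on an ordinal $\lambda$ such that $X_0=(X^0,X^0,\varnothing)$ for a set $X^0$, and for each $\nu<\lambda$, $X_{\nu+1}$ is the pushout of $\mathrm{Glob}^{\mathrm{top}}(\mathbf{S}^{n_\nu-1})\to\mathrm{Glob}^{\mathrm{top}}(\mathbf{D}^{n_\nu})$ (induced by the inclusion) along some map $g_\nu:\mathrm{Glob}^{\mathrm{top}}(\mathbf{S}^{n_\nu-1})\to X_\nu$, $n_\nu\ge0$; let $\widehat{g_\nu}:\mathrm{Glob}^{\mathrm{top}}(\mathbf{D}^{n_\nu})\to X_\lambda$ be the induced map. Known fact (used to define $\mathrm{natgl}$): every execution path $\gamma$ of $X_\lambda$ has a unique decomposition $\gamma=\mathrm{natgl}(\gamma)\phi$ with $\mathrm{natgl}(\gamma)=(\widehat{g_{\nu_1}}\delta_{z_1})*\dots*(\widehat{g_{\nu_n}}\delta_{z_n})$, $n\ge1$, $\nu_i<\lambda$, $z_i\in\mathbf{D}^{n_{\nu_i}}\setminus\mathbf{S}^{n_{\nu_i}-1}$, and $\phi\in\mathcal{M}(1,n)$; $\mathrm{natgl}(\gamma)$ is called the globular naturalization of $\gamma$. A Moore path $\gamma:[0,L]\to U$ is regular if it is constant, or if whenever $[a,b]\subset[0,L]$ and $\gamma$ restricted to $[a,b]$ is constant, then $a=b$. *)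

(* Defs.v *)
From HB Require Import structures.
From mathcomp Require Import all_boot all_order all_algebra.
From mathcomp Require Import all_classical all_reals topology normedtype.
Import Order.TTheory GRing.Theory Num.Theory numFieldNormedType.Exports.
Local Open Scope classical_set_scope.
Local Open Scope ring_scope.

(* Conventions.  A path [0,l] -> U is represented by a function R -> U;    *)
(* only its values on [0,l] matter.  Continuity is continuity of the       *)

Definition reparam {R : realType} (l l' : R) (phi : R -> R) : Prop :=
  [/\ {within `[0, l]%classic, continuous phi},
      (forall t, t \in `[0, l] -> phi t \in `[0, l']),
      (forall s t, s \in `[0, l] -> t \in `[0, l] -> s <= t -> phi s <= phi t)
    & (forall u, u \in `[0, l'] -> exists2 t, t \in `[0, l] & phi t = u)].

Definition moore_comp {R : realType} {U : Type} (l1 : R) (g1 g2 : R -> U) : R -> U :=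
  fun t => if t <= l1 then g1 t else g2 (t - l1).

Fixpoint moore_concat {R : realType} {U : Type} (p : R -> U) (qs : seq (R -> U))
  : R -> U :=
  match qs with
  | [::] => p
  | q :: qs' => moore_comp 1 p (moore_concat q qs')
  end.

Definition norm_comp {R : realType} {U : Type} (g1 g2 : R -> U) : R -> U :=
  fun t => if t <= 2^-1 then g1 (2 * t) else g2 (2 * t - 1).

Definition regular_path {R : realType} {U : Type} (L : R) (g : R -> U) : Prop :=
  (exists u, forall t, t \in `[0, L] -> g t = u) \/
  (forall a b, 0 <= a -> a <= b -> b <= L ->
     (forall s t, s \in `[a, b] -> t \in `[a, b] -> g s = g t) -> a = b).

Record mdspace (R : realType) := MDSpace {
  mds_car : topologicalType;
  mds_states : set mds_car;
  mds_paths : set (R -> mds_car);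
  (* representation convention: a path is determined by its values on [0,1] *)
  mds_paths_ext : forall g g', mds_paths g ->
     (forall t, t \in `[0, 1] -> g t = g' t) -> mds_paths g';
  mds_paths_cont : forall g, mds_paths g -> {within `[0, 1]%classic, continuous g};
  mds_paths_ends : forall g, mds_paths g ->
     mds_states (g 0) /\ mds_states (g 1);
  mds_paths_reparam : forall g phi, mds_paths g -> reparam 1 1 phi ->
     mds_paths (g \o phi);
  mds_paths_comp : forall g1 g2, mds_paths g1 -> mds_paths g2 ->
     g1 1 = g2 0 -> mds_paths (norm_comp g1 g2) }.
Arguments mds_car {R} m.
Arguments mds_states {R} m _.
Arguments mds_paths {R} m _.

Definition mds_map {R : realType} {X Y : mdspace R}
    (f : mds_car X -> mds_car Y) : Prop :=
  [/\ continuous f,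
      (forall x, mds_states X x -> mds_states Y (f x))
    & (forall g, mds_paths X g -> mds_paths Y (f \o g))].

Definition sqnorm {R : realType} {n : nat} (z : 'rV[R]_n) : R :=
  \sum_(i < n) z ord0 i ^+ 2.
Definition disk (R : realType) (n : nat) : set 'rV[R]_n := [set z | sqnorm z <= 1].
Definition sphere (R : realType) (n : nat) : set 'rV[R]_n := [set z | sqnorm z = 1].
Arguments disk R n : clear implicits.
Arguments sphere R n : clear implicits.
Definition open_disk (R : realType) (n : nat) : set 'rV[R]_n := [set z | sqnorm z < 1].
Arguments open_disk R n : clear implicits.

(* Maps Glob^top(Z) -> X, for Z a subset of R^n.  By the universal        *)
(* property of the quotient |Glob^top(Z)| of {0,1} + Z x [0,1], such a map *)
(* is the same as the images a, b of the states 0, 1 and a continuous map  *)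
(* h : Z x [0,1] -> |X| (the composite with the quotient map), with        *)
(* h(z,0) = a, h(z,1) = b.  It is a map of multipointed d-spaces iff a, b  *)
(* are states and every h(z, phi(-)), phi in M(1,1), is an execution path. *)
(* Two such maps are equal iff a, b agree and h agrees on Z x [0,1].       *)
Definition glob_map {R : realType} {n : nat} (Z : set 'rV[R]_n) {X : mdspace R}
    (a b : mds_car X) (h : 'rV[R]_n -> R -> mds_car X) : Prop :=
  [/\ mds_states X a, mds_states X b,
      {within Z `*` `[0, 1]%classic, continuous (fun p : 'rV[R]_n * R => h p.1 p.2)},
      (forall z, Z z -> h z 0 = a /\ h z 1 = b)
    & (forall z phi, Z z -> reparam 1 1 phi -> mds_paths X (h z \o phi))].

(* Cellular towers indexed by a well-ordered type W whose greatest         *)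
(* element top plays the role of lambda (so W ~ lambda + 1).               *)
Definition is_succ {d} {W : orderType d} (nu nu' : W) : Prop :=
  (nu < nu')%O /\ ~ (exists xi, (nu < xi)%O /\ (xi < nu')%O).

Definition is_limit {d} {W : orderType d} (nu : W) : Prop :=
  (exists mu, (mu < nu)%O) /\ ~ (exists mu, is_succ mu nu).

Definition initial_stage {R : realType} (X : mdspace R) : Prop :=
  [/\ (forall A : set (mds_car X), open A),
      mds_states X = setT
    & mds_paths X = set0].

Definition is_functor {R : realType} {d} {W : orderType d} (X : W -> mdspace R)
    (tr : forall mu nu : W, (mu <= nu)%O -> mds_car (X mu) -> mds_car (X nu))
    : Prop :=
  [/\ (forall mu nu (h : (mu <= nu)%O), mds_map (tr mu nu h)),
      (forall mu (h : (mu <= mu)%O) x, tr mu mu h x = x)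
    & (forall mu nu xi (h1 : (mu <= nu)%O) (h2 : (nu <= xi)%O) (h3 : (mu <= xi)%O) x,
         tr nu xi h2 (tr mu nu h1 x) = tr mu xi h3 x)].

Definition is_chain_colimit {R : realType} {d} {W : orderType d}
    (X : W -> mdspace R)
    (tr : forall mu nu : W, (mu <= nu)%O -> mds_car (X mu) -> mds_car (X nu))
    (nu : W) : Prop :=
  forall (Y : mdspace R) (c : forall mu : W, mds_car (X mu) -> mds_car Y),
    (forall mu, (mu < nu)%O -> mds_map (c mu)) ->
    (forall mu mu' (h : (mu <= mu')%O), (mu' < nu)%O ->
        forall x, c mu' (tr mu mu' h x) = c mu x) ->
    exists u : mds_car (X nu) -> mds_car Y,
      [/\ mds_map u,
          (forall mu (h : (mu <= nu)%O), (mu < nu)%O ->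
             forall x, u (tr mu nu h x) = c mu x)
        & (forall u' : mds_car (X nu) -> mds_car Y, mds_map u' ->
             (forall mu (h : (mu <= nu)%O), (mu < nu)%O ->
                forall x, u' (tr mu nu h x) = c mu x) ->
             u' = u)].

Definition is_cell_pushout {R : realType} {n : nat} {Xn Xn' : mdspace R}
    (f : mds_car Xn -> mds_car Xn')
    (a b : mds_car Xn) (g : 'rV[R]_n -> R -> mds_car Xn)
    (a' b' : mds_car Xn') (G : 'rV[R]_n -> R -> mds_car Xn') : Prop :=
  [/\ glob_map (sphere R n) a b g,
      glob_map (disk R n) a' b' G,
      mds_map f,
      (f a = a' /\ f b = b' /\
       forall z t, sphere R n z -> t \in `[0, 1] -> f (g z t) = G z t)
    & forall (Y : mdspace R) (k : mds_car Xn -> mds_car Y)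
             (c e : mds_car Y) (K : 'rV[R]_n -> R -> mds_car Y),
        mds_map k -> glob_map (disk R n) c e K ->
        k a = c -> k b = e ->
        (forall z t, sphere R n z -> t \in `[0, 1] -> k (g z t) = K z t) ->
        exists u : mds_car Xn' -> mds_car Y,
          [/\ mds_map u,
              (forall x, u (f x) = k x),
              (u a' = c /\ u b' = e /\
               forall z t, disk R n z -> t \in `[0, 1] -> u (G z t) = K z t)
            & (forall u' : mds_car Xn' -> mds_car Y, mds_map u' ->
                 (forall x, u' (f x) = k x) ->
                 (u' a' = c /\ u' b' = e /\
                  forall z t, disk R n z -> t \in `[0, 1] -> u' (G z t) = K z t) ->
                 u' = u)]].

(* A cellular multipointed d-space, presented as in the paper:
   - W is a well-ordered type with least element bot (the ordinal 0) and
     greatest element top (the ordinal lambda), i.e. W ~ lambda + 1;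
     X top is the cellular multipointed d-space X_lambda;
   - nu |-> X nu is a functor (transition maps tr), X bot = (X^0, X^0, empty);
   - at every limit element nu, X nu = colim_{mu < nu} X mu (this includes
     nu = top when lambda is a limit ordinal);
   - for every nu < top, with successor nu', X nu' is the pushout of
     Glob(S^{nn nu - 1}) -> Glob(D^{nn nu}) along some g_nu : Glob(S^{nn nu-1})
     -> X nu; ghat nu is the induced map Glob(D^{nn nu}) -> X top (given by
     its values hg nu on D^{nn nu} x [0,1], cf. glob_map), i.e. the composite
     of the pushout leg Glob(D^{nn nu}) -> X nu' with tr nu' top. *)
Definition cellular_presentation {R : realType} {d} {W : orderType d}
    (bot top : W) (X : W -> mdspace R)
    (tr : forall mu nu : W, (mu <= nu)%O -> mds_car (X mu) -> mds_car (X nu))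
    (nn : W -> nat)
    (hg : forall nu : W, (nu < top)%O -> 'rV[R]_(nn nu) -> R -> mds_car (X top))
    : Prop :=
  [/\ well_founded (fun x y : W => (x < y)%O),
      (forall nu : W, (bot <= nu)%O) /\ (forall nu : W, (nu <= top)%O),
      initial_stage (X bot) /\ is_functor X tr,
      (forall nu : W, is_limit nu -> is_chain_colimit X tr nu)
    & (forall (nu nu' : W), is_succ nu nu' ->
        forall (hlt : (nu < top)%O) (hle : (nu' <= top)%O) (hs : (nu <= nu')%O),
        exists (a b : mds_car (X nu)) (g : 'rV[R]_(nn nu) -> R -> mds_car (X nu))
               (G : 'rV[R]_(nn nu) -> R -> mds_car (X nu')),
          is_cell_pushout (tr nu nu' hs) a b g (tr nu nu' hs a) (tr nu nu' hs b) G
          /\ (forall z t, disk R (nn nu) z -> t \in `[0, 1] ->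
                 tr nu' top hle (G z t) = hg nu hlt z t))].

(* A point of the globular naturalization: an index nu < top and a point z
   of D^{nn nu}; its path is ghat_nu delta_z : t |-> ghat_nu (z, t). *)
Definition cellpt (R : realType) {d} {W : orderType d} (top : W) (nn : W -> nat)
  := {nu : W & {hlt : (nu < top)%O & 'rV[R]_(nn nu)}}.

Definition cell_path {R : realType} {d} {W : orderType d} {top : W} {nn : W -> nat}
    {C : Type} (hg : forall nu : W, (nu < top)%O -> 'rV[R]_(nn nu) -> R -> C)
    (p : @cellpt R d W top nn) : R -> C :=
  hg (projT1 p) (projT1 (projT2 p)) (projT2 (projT2 p)).

Definition cell_interior {R : realType} {d} {W : orderType d} {top : W}
    {nn : W -> nat} (p : @cellpt R d W top nn) : Prop :=
  open_disk R (nn (projT1 p)) (projT2 (projT2 p)).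

Definition natgl_path {R : realType} {d} {W : orderType d} {top : W} {nn : W -> nat}
    {C : Type} (hg : forall nu : W, (nu < top)%O -> 'rV[R]_(nn nu) -> R -> C)
    (p0 : @cellpt R d W top nn) (ps : seq (@cellpt R d W top nn)) : R -> C :=
  moore_concat (cell_path hg p0) (map (cell_path hg) ps).

(* Main.v *)
Require Import Defs.
From HB Require Import structures.
From mathcomp Require Import all_boot all_order all_algebra.
From mathcomp Require Import all_classical all_reals topology normedtype.
From mathcomp Require Import lra.
Import Order.TTheory GRing.Theory Num.Theory numFieldNormedType.Exports.
Local Open Scope classical_set_scope.
Local Open Scope ring_scope.

Definition chaos (T : Type) : Type := T.
HB.instance Definition _ (T : choiceType) := Choice.on (chaos T).

Section Chaos.
Variable T : choiceType.
Definition chop : set_system (chaos T) := fun A => A = set0 \/ A = setT.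
Lemma chopT : chop setT. Proof. by right. Qed.
Lemma chopI : setI_closed chop.
Proof. by move=> A B [->|->] [->|->]; rewrite ?set0I ?setI0 ?setIT ?setTI; [left|left|left|right]. Qed.
Lemma chop_bigU (I : Type) (f : I -> set (chaos T)) : (forall i, chop (f i)) -> chop (\bigcup_i f i).
Proof.
move=> hf; have [[i fi]|nf] := pselect (exists i, f i = setT).
  by right; apply/seteqP; split=> // x _; exists i => //; rewrite fi.
left; apply/seteqP; split=> // x [i _ fx].
have [fi|fi] := hf i; first by rewrite fi in fx.
by exfalso; apply: nf; exists i.
Qed.
HB.instance Definition _ := isOpenTopological.Build (chaos T) chopT chopI chop_bigU.
End Chaos.

Lemma chaos_cont (S : topologicalType) (T : choiceType) (f : S -> chaos T) : continuous f.
Proof.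
apply/continuousP => A [->|->]; first by rewrite preimage_set0; exact: open0.
rewrite preimage_setT; exact: openT.
Qed.

Definition chaos_mds (R : realType) (T : choiceType) : mdspace R.
Proof.
refine (@MDSpace R (chaos T : topologicalType) setT setT _ _ _ _ _) => //.
move=> g _; exact: chaos_cont.
Defined.

Lemma chaos_map (R : realType) (T : choiceType) (X : mdspace R)
  (f : mds_car X -> T) : @mds_map R X (chaos_mds R T) f.
Proof. by split => //; exact: chaos_cont. Qed.

Lemma chaos_glob (R : realType) (T : choiceType) (n : nat) (Z : set 'rV[R]_n)
  (a b : T) (h : 'rV[R]_n -> R -> T) :
  (forall z, Z z -> h z 0 = a /\ h z 1 = b) ->
  @glob_map R n Z (chaos_mds R T) a b h.
Proof. by move=> H; split => //; exact: chaos_cont. Qed.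

Lemma pushout_leg_inj (R : realType) (n : nat) (Xn Xn' : mdspace R)
    (f : mds_car Xn -> mds_car Xn')
    (a b : mds_car Xn) (g : 'rV[R]_n -> R -> mds_car Xn)
    (a' b' : mds_car Xn') (G : 'rV[R]_n -> R -> mds_car Xn') :
  is_cell_pushout f a b g a' b' G -> injective f.
Proof.
case=> [[_ _ _ gend _] _ _ _ PO].
pose K z t := if `[< sphere R n z /\ t \in `[0, 1] >] then g z t
              else if t == 1 then b else a.
have KG : @glob_map R n (disk R n) (chaos_mds R (mds_car Xn)) a b K.
  apply: chaos_glob => z _; rewrite /K; split.
    case: asboolP => [[zs _]|_]; first by case: (gend z zs).
    by rewrite eq_sym oner_eq0.
  by case: asboolP => [[zs _]|_]; [case: (gend z zs)| rewrite eqxx].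
have Kg : forall z t, sphere R n z -> t \in `[0, 1] -> id (g z t) = K z t.
  move=> z t zs tI; rewrite /K; case: asboolP => // -[]; by split.
have [u [_ uf _ _]] := PO (chaos_mds R (mds_car Xn)) id a b K
   (chaos_map _ _ _ _) KG erefl erefl Kg.
by move=> x y /(congr1 u); rewrite !uf.
Qed.

Lemma pushout_G_inj (R : realType) (n : nat) (Xn Xn' : mdspace R)
    (f : mds_car Xn -> mds_car Xn')
    (a b : mds_car Xn) (g : 'rV[R]_n -> R -> mds_car Xn)
    (a' b' : mds_car Xn') (G : 'rV[R]_n -> R -> mds_car Xn') :
  is_cell_pushout f a b g a' b' G ->
  forall z s t, open_disk R n z -> 0 < s < 1 -> 0 < t < 1 -> G z s = G z t -> s = t.
Proof.
case=> [_ _ _ _ PO] z s t zo sI tI.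
pose K (z : 'rV[R]_n) (t : R) : R := if (sqnorm z < 1) && (0 < t < 1) then t else 0.
have KG : @glob_map R n (disk R n) (chaos_mds R R) 0 0 K.
  by apply: chaos_glob => z' _; rewrite /K !ltxx ?andbF ?andFb.
have Kg : forall z' t', sphere R n z' -> t' \in `[0, 1] -> (fun _ => 0) (g z' t') = K z' t'.
  by move=> z' t' zs _; rewrite /K /= zs ltxx.
have [u [_ _ [_ [_ uG]] _]] := PO (chaos_mds R R) (fun _ => 0) 0 0 K
   (chaos_map _ _ _ _) KG erefl erefl Kg.
have zd : disk R n z by rewrite /disk /=; apply: ltW.
have inI r : 0 < r < 1 -> r \in `[0, 1].
  by move=> /andP[r0 r1]; rewrite in_itv /= (ltW r0) (ltW r1).
move=> /(congr1 u); rewrite !uG // ?inI // /K.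
by rewrite zo sI tI.
Qed.

Section Cell.
Variables (R : realType) (d : Order.disp_t) (W : orderType d)
  (bot top : W) (X : W -> mdspace R)
  (tr : forall mu nu : W, (mu <= nu)%O -> mds_car (X mu) -> mds_car (X nu))
  (nn : W -> nat)
  (hg : forall nu : W, (nu < top)%O -> 'rV[R]_(nn nu) -> R -> mds_car (X top)).
Hypothesis CP : cellular_presentation bot top X tr nn hg.

Lemma tr_id mu (h : (mu <= mu)%O) x : tr mu mu h x = x.
Proof. by case: CP => _ _ [_ [_ H _]] _ _; exact: H. Qed.

Lemma tr_comp m1 m2 m3 (h1 : (m1 <= m2)%O) (h2 : (m2 <= m3)%O) (h3 : (m1 <= m3)%O) x :
  tr m2 m3 h2 (tr m1 m2 h1 x) = tr m1 m3 h3 x.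
Proof. by case: CP => _ _ [_ [_ _ H]] _ _; exact: H. Qed.

Lemma tr_inj : forall xi mu (h : (mu <= xi)%O), injective (tr mu xi h).
Proof.
have hwf : well_founded (fun x y : W => (x < y)%O) by case: CP.
move=> xi; induction xi as [xi IH] using (well_founded_induction hwf).
move=> mu h.
have [emu|nmu] := eqVneq mu xi.
  by subst mu => x y; rewrite !tr_id.
have lt_mu : (mu < xi)%O by rewrite lt_neqAle nmu h.
have [[p [pxi nop]]|nsucc] := pselect (exists p, is_succ p xi).
  have mup : (mu <= p)%O.
    rewrite leNgt; apply/negP => pmu; apply: nop; by exists mu.
  have pxi' : (p <= xi)%O by exact: ltW.
  have ptop : (p < top)%O.
    by apply: (lt_le_trans pxi); case: CP => _ [_ ->].
  have xitop : (xi <= top)%O by case: CP => _ [_ ->].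
  have [a [b [g [G [PO _]]]]] :
     exists (a b : mds_car (X p)) (g : 'rV[R]_(nn p) -> R -> mds_car (X p))
               (G : 'rV[R]_(nn p) -> R -> mds_car (X xi)),
          is_cell_pushout (tr p xi pxi') a b g (tr p xi pxi' a) (tr p xi pxi' b) G
          /\ (forall z t, disk R (nn p) z -> t \in `[0, 1] ->
                 tr xi top xitop (G z t) = hg p ptop z t).
    by case: CP => _ _ _ _ H; apply: H.
  move=> x y.
  rewrite -(tr_comp _ _ _ mup pxi' h x) -(tr_comp _ _ _ mup pxi' h y).
  by move/(pushout_leg_inj _ _ _ _ _ _ _ _ _ _ _ PO)/(IH p pxi).
have lim : is_limit xi by split; [exists mu|].
have colim : is_chain_colimit X tr xi by case: CP => _ _ _ H _; exact: H.
pose c (m : W) (w : mds_car (X m)) : set (mds_car (X mu)) :=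
  [set x | exists h1 : (mu <= m)%O, tr mu m h1 x = w] `|`
  [set x | exists h2 : (m <= mu)%O, x = tr m mu h2 w].
have c_ge m (hm : (mu <= m)%O) w : c m w = [set x | tr mu m hm x = w].
  apply/seteqP; split => x.
    case=> [[h1 <-]|[h2 ->]]; first by rewrite (eq_irrelevance h1 hm).
    have e : m = mu by apply/le_anti; rewrite h2 hm.
    subst m; rewrite /=. rewrite tr_id. by rewrite tr_id.
  by move=> <-; left; exists hm.
have c_le m (hm : (m <= mu)%O) w : c m w = [set tr m mu hm w].
  apply/seteqP; split => x.
    case=> [[h1 <-]|[h2 ->]]; last by rewrite /= (eq_irrelevance h2 hm).
    have e : m = mu by apply/le_anti; rewrite h1 hm.
    by subst m; rewrite /= !tr_id.
  by move=> ->; right; exists hm.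
have cc : forall m1 m2 (h12 : (m1 <= m2)%O), (m2 < xi)%O ->
    forall w, c m2 (tr m1 m2 h12 w) = c m1 w.
  move=> m1 m2 h12 m2xi w.
  have [h1|h1] := leP mu m1.
    have h2 : (mu <= m2)%O by exact: le_trans h12.
    rewrite (c_ge _ h1) (c_ge _ h2); apply/seteqP; split => x /=.
      by rewrite -(tr_comp _ _ _ h1 h12 h2) => /(IH m2 m2xi).
    by move=> <-; rewrite (tr_comp _ _ _ h1 h12 h2).
  have h1' : (m1 <= mu)%O by exact: ltW.
  have [h2|h2] := leP mu m2.
    rewrite (c_ge _ h2) (c_le _ h1'); apply/seteqP; split => x /=.
      by rewrite -(tr_comp _ _ _ h1' h2 h12) => /(IH m2 m2xi).
    by move=> ->; rewrite (tr_comp _ _ _ h1' h2 h12).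
  have h2' : (m2 <= mu)%O by exact: ltW.
  by rewrite (c_le _ h2') (c_le _ h1') (tr_comp _ _ _ h12 h2' h1').
have [u [_ uc _]] := colim (chaos_mds R (set (mds_car (X mu)))) c
   (fun m _ => chaos_map _ _ _ _) cc.
move=> x y /(congr1 u); rewrite !uc // !(c_ge _ (lexx mu)) => e.
have : [set x0 | tr mu mu (lexx mu) x0 = x] x by rewrite /= tr_id.
by rewrite e /= tr_id.
Qed.

Lemma succ_exists nu : (nu < top)%O -> exists nu', is_succ nu nu'.
Proof.
have hwf : well_founded (fun x y : W => (x < y)%O) by case: CP.
have minP : forall x, (nu < x)%O ->
    exists m, (nu < m)%O /\ forall y, (y < m)%O -> ~ (nu < y)%O.
  move=> x; induction x as [x IH] using (well_founded_induction hwf) => nx.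
  have [[y [yx ny]]|no] := pselect (exists y, (y < x)%O /\ (nu < y)%O).
    exact: IH yx ny.
  by exists x; split => // y yx ny; apply: no; exists y.
move=> /minP [m [nm H]]; exists m; split => //.
by move=> [xi [nxi xim]]; exact: (H xi xim nxi).
Qed.

Lemma hg_inj nu (hlt : (nu < top)%O) z s t : open_disk R (nn nu) z ->
  0 < s < 1 -> 0 < t < 1 -> hg nu hlt z s = hg nu hlt z t -> s = t.
Proof.
move=> zo sI tI.
have [nu' sc] := succ_exists nu hlt.
have hle : (nu' <= top)%O by case: CP => _ [_ ->].
have hs : (nu <= nu')%O by case: sc => /ltW.
have [a [b [g [G [PO E]]]]] :
     exists (a b : mds_car (X nu)) (g : 'rV[R]_(nn nu) -> R -> mds_car (X nu))
               (G : 'rV[R]_(nn nu) -> R -> mds_car (X nu')),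
          is_cell_pushout (tr nu nu' hs) a b g (tr nu nu' hs a) (tr nu nu' hs b) G
          /\ (forall z t, disk R (nn nu) z -> t \in `[0, 1] ->
                 tr nu' top hle (G z t) = hg nu hlt z t).
  by case: CP => _ _ _ _ H; apply: H.
have zd : disk R (nn nu) z by rewrite /disk /=; apply: ltW.
have inI r : 0 < r < 1 -> r \in `[0, 1].
  by move=> /andP[r0 r1]; rewrite in_itv /= (ltW r0) (ltW r1).
rewrite -!E ?inI // => /tr_inj.
exact: (pushout_G_inj _ _ _ _ _ _ _ _ _ _ _ PO).
Qed.
End Cell.

Lemma moore_nth (R : realType) (U : Type) (fs : seq (R -> U)) (p : R -> U) (k : nat) (t : R) :
  (k <= size fs)%N -> k%:R < t -> t <= k.+1%:R ->
  moore_concat p fs t = nth p (p :: fs) k (t - k%:R).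
Proof.
elim: fs p k t => [|q fs IH] p k t /=.
  by rewrite leqn0 => /eqP -> _ _; rewrite subr0.
rewrite /moore_comp; case: k => [|k] hk kt tk.
  by rewrite tk subr0.
have t1 : ~~ (t <= 1).
  rewrite -ltNge; apply: le_lt_trans kt; rewrite -[1]/(1%:R) ler_nat //.
rewrite (negbTE t1) (IH q k) //.
- rewrite (set_nth_default q) //; congr (_ _).
  by rewrite -nat1r; lra.
- by move: kt; rewrite -!nat1r; lra.
- by move: tk; rewrite -!nat1r; lra.
Qed.

Theorem proposition4p8 (R : realType) (d : Order.disp_t) (W : orderType d)
  (bot top : W) (X : W -> mdspace R)
  (tr : forall mu nu : W, (mu <= nu)%O -> mds_car (X mu) -> mds_car (X nu))
  (nn : W -> nat)
  (hg : forall nu : W, (nu < top)%O -> 'rV[R]_(nn nu) -> R -> mds_car (X top)) :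
  cellular_presentation bot top X tr nn hg ->
  forall gam : R -> mds_car (X top), mds_paths (X top) gam ->
  forall (p0 : cellpt R top nn) (ps : seq (cellpt R top nn)) (phi : R -> R),
    cell_interior p0 -> (forall i, (i < size ps)%N -> cell_interior (nth p0 ps i)) ->
    reparam 1 (size ps).+1%:R phi ->
    (forall t, t \in `[0, 1] -> gam t = natgl_path hg p0 ps (phi t)) ->
    regular_path (size ps).+1%:R (natgl_path hg p0 ps).
Proof.
move=> CP gam _ p0 ps phi ip0 ips _ _.
right => a b a0 ab bN hc.
apply/eqP; rewrite eq_le ab /= leNgt; apply/negP => altb.
set k := Num.truncn a.
have /andP[ka ak] := truncn_itv a0.
move: ka ak; rewrite -/k => ka ak.
have kN : (k <= size ps)%N.
  by rewrite -ltnS truncn_lt_nat //; apply: lt_le_trans bN.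
set m := Num.min (b - a) (k.+1%:R - a).
have m0 : 0 < m by rewrite lt_min !subr_gt0 altb ak.
have m1 : m <= b - a by rewrite ge_min lexx.
have m2 : m <= k.+1%:R - a by rewrite ge_min lexx orbT.
set s := a + m / 3; set t := a + m * 2 / 3.
have inab r : a <= r -> r <= b -> r \in `[a, b] by move=> ? ?; rewrite in_itv /= ; apply/andP.
have e : natgl_path hg p0 ps (a + m / 3) = natgl_path hg p0 ps (a + m * 2 / 3).
  by apply: hc; apply: inab; lra.
have h1 : k%:R < a + m / 3 by lra.
have h2 : a + m / 3 <= k.+1%:R by lra.
have h3 : k%:R < a + m * 2 / 3 by lra.
have h4 : a + m * 2 / 3 <= k.+1%:R by lra.
move: e; rewrite /natgl_path !(moore_nth _ _ _ _ k) ?size_map //.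
rewrite -/(map (cell_path hg) (p0 :: ps)) !(nth_map p0) //=.
have iq : cell_interior (nth p0 (p0 :: ps) k).
  by case: (k) kN => [|k'] kN //=; apply: ips.
move: iq; case: (nth p0 (p0 :: ps) k) => nu [hlt z] /= iq.
rewrite /cell_path /= => /(hg_inj _ _ _ _ _ _ _ _ _ CP nu hlt z _ _ iq) H.
have : a + m / 3 - k%:R = a + m * 2 / 3 - k%:R.
  by apply: H; apply/andP; split; move: ak; rewrite -nat1r; lra.
lra.
Qed.
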